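(* Let $X$ be a set and let $A$ and $B$ be Banach algebras of complex-valued functions on $X$ (with pointwise operations), each containing the constant functions on $X$. Let $\psi:A\to B$ be a continuous algebra homomorphism and $\varphi\in\Delta(B)$. Let $F$ be the linear span of the set of all $f\in A$ such that $P(f)=0$ for some nonzero polynomial $P$ in one complex variable. If $F$ is dense in $A$ (in the norm of $A$), then every $(\varphi,\psi)$-point derivation on $A$ is zero, i.e. $\mathfrak{D}_{(\varphi,\psi)}=\{0\}$.
   Context: $\Delta(B)$ denotes the set of all nonzero multiplicative linear functionals on $B$. A bounded linear functional $D$ on $A$ is a $(\varphi,\psi)$-point derivation if $D(ab)=\varphi(\psi(a))\,D(b)+\varphi(\psi(b))\,D(a)$ for all $a,b\in A$; $\mathfrak{D}_{(\varphi,\psi)}$ is the set of all of them. *)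

(* Defs.v *)
From mathcomp Require Import all_boot all_order all_algebra.
From mathcomp Require Import complex.
From mathcomp Require Import reals.
Set Implicit Arguments. Unset Strict Implicit. Unset Printing Implicit Defensive.
Import Order.TTheory GRing.Theory Num.Theory.
Local Open Scope ring_scope.

Notation cmod := (@Normc.normc _).

Section FunBanach.
Variables (R : realType) (X : Type).
Local Notation C := (R[i]).
Local Notation FX := (X -> C).

Definition fadd (f g : FX) : FX := fun x => f x + g x.
Definition fsub (f g : FX) : FX := fun x => f x - g x.
Definition fmul (f g : FX) : FX := fun x => f x * g x.
Definition fscale (c : C) (f : FX) : FX := fun x => c * f x.
Definition fcst (c : C) : FX := fun _ => c.

(* (S, N) is a Banach algebra of complex-valued functions on X, with pointwise
   operations, containing the constant functions: S is the carrier (a set of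
   functions), N the norm (only its values on S matter). *)
Definition fun_banach_algebra (S : FX -> Prop) (N : FX -> R) : Prop :=
  (forall c, S (fcst c)) /\
      (forall f g, S f -> S g -> S (fadd f g)) /\
      (forall c f, S f -> S (fscale c f)) /\
      (forall f g, S f -> S g -> S (fmul f g)) /\
      (forall f, S f -> 0 <= N f) /\
      (forall f, S f -> N f = 0 -> f = fcst 0) /\
      (forall c f, S f -> N (fscale c f) = cmod c * N f) /\
      (forall f g, S f -> S g -> N (fadd f g) <= N f + N g) /\
      (forall f g, S f -> S g -> N (fmul f g) <= N f * N g)/\
      (forall u : nat -> FX, (forall n, S (u n)) ->
        (forall e : R, 0 < e -> exists n0, forall m n, (n0 <= m)%N -> (n0 <= n)%N ->
            N (fsub (u m) (u n)) < e) ->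
        exists l, S l /\ forall e : R, 0 < e -> exists n0, forall n, (n0 <= n)%N ->
            N (fsub (u n) l) < e).

Definition alg_hom (SA SB : FX -> Prop) (psi : FX -> FX) : Prop :=
  [/\ (forall f, SA f -> SB (psi f)),
      (forall f g, SA f -> SA g -> psi (fadd f g) = fadd (psi f) (psi g)),
      (forall c f, SA f -> psi (fscale c f) = fscale c (psi f)) &
      (forall f g, SA f -> SA g -> psi (fmul f g) = fmul (psi f) (psi g))].

Definition continuous_on_fa (SA : FX -> Prop) (NA NB : FX -> R) (psi : FX -> FX) :=
  forall f, SA f -> forall e : R, 0 < e -> exists2 d : R, 0 < d &
    forall g, SA g -> NA (fsub g f) < d -> NB (fsub (psi g) (psi f)) < e.

Definition lin_functional (S : FX -> Prop) (L : FX -> C) : Prop :=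
  (forall f g, S f -> S g -> L (fadd f g) = L f + L g) /\
  (forall c f, S f -> L (fscale c f) = c * L f).

Definition bounded_lin_functional (S : FX -> Prop) (N : FX -> R) (L : FX -> C) :=
  lin_functional S L /\ exists M : R, forall f, S f -> cmod (L f) <= M * N f.

Definition in_Delta (S : FX -> Prop) (phi : FX -> C) : Prop :=
  [/\ lin_functional S phi,
      (forall f g, S f -> S g -> phi (fmul f g) = phi f * phi g) &
      exists2 f, S f & phi f != 0].

Definition point_derivation (SA : FX -> Prop) (NA : FX -> R)
    (phi : FX -> C) (psi : FX -> FX) (D : FX -> C) : Prop :=
  bounded_lin_functional SA NA D /\
  forall a b, SA a -> SA b ->
    D (fmul a b) = phi (psi a) * D b + phi (psi b) * D a.

Definition poly_annihilated (f : FX) : Prop :=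
  exists2 P : {poly C}, P != 0 & forall x, P.[f x] = 0.

Definition in_alg_span (SA : FX -> Prop) (h : FX) : Prop :=
  exists n (c : 'I_n -> C) (g : 'I_n -> FX),
    (forall i, SA (g i) /\ poly_annihilated (g i)) /\
    h = fun x => \sum_(i < n) c i * g i x.

Definition dense_in (SA F : FX -> Prop) (NA : FX -> R) : Prop :=
  forall f, SA f -> forall e : R, 0 < e -> exists2 h, F h & NA (fsub f h) < e.

End FunBanach.

(* Main.v *)
Require Import Defs.
From mathcomp Require Import all_boot all_order all_algebra.
From mathcomp Require Import complex.
From mathcomp Require Import reals.
From Stdlib Require Import FunctionalExtensionality.
Import Order.TTheory GRing.Theory Num.Theory.
Local Open Scope ring_scope.

Fixpoint cc {F : comNzRingType} (a : F) (s : seq F) : F :=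
  match s with
  | [::] => 0
  | r :: s' => (a - r) * cc a s' + \prod_(x <- s') (a - x)
  end.

Lemma prod_in0 (F : idomainType) (a : F) (s : seq F) :
  (\prod_(x <- s) (a - x) == 0) = (a \in s).
Proof.
elim: s => [|r s IH]; first by rewrite big_nil oner_eq0.
rewrite big_cons mulf_eq0 IH in_cons subr_eq0 //.
Qed.

Lemma cc_neq0 (F : idomainType) (a : F) (s : seq F) :
  uniq s -> a \in s -> cc a s != 0.
Proof.
elim: s => [|r s IH] //= /andP [rs us].
rewrite in_cons; case/orP => [/eqP ar | ains].
  by rewrite ar subrr mul0r add0r prod_in0.
have -> : \prod_(x <- s) (a - x) = 0 by apply/eqP; rewrite prod_in0.
rewrite addr0 mulf_neq0 ?IH // subr_eq0; apply/eqP => ar.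
by move: rs; rewrite -ar ains.
Qed.

Theorem corollary2p6 (R : realType) (X : Type)
    (SA SB : (X -> R[i]) -> Prop) (NA NB : (X -> R[i]) -> R)
    (psi : (X -> R[i]) -> (X -> R[i])) (phi : (X -> R[i]) -> R[i]) :
  fun_banach_algebra SA NA ->
  fun_banach_algebra SB NB ->
  alg_hom SA SB psi ->
  continuous_on_fa SA NA NB psi ->
  in_Delta SB phi ->
  dense_in SA (in_alg_span SA) NA ->
  forall D : (X -> R[i]) -> R[i],
    point_derivation SA NA phi psi D -> forall f, SA f -> D f = 0.
Proof.
move=> [Scst [Sadd [Sscl [Smul [N0 [Nz [Nscl [Ntri [Nmul _]]]]]]]]] _.
move=> [psiS psiD psiZ psiM] _ [[phD phZ] phM _] Hdense D.
move=> [[[DD DZ] [M HM]] Dder].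
pose chi := fun f => phi (psi f).
have chiD : forall f g, SA f -> SA g -> chi (fadd f g) = chi f + chi g.
  by move=> f g Sf Sg; rewrite /chi psiD // phD //; apply: psiS.
have chiZ : forall c f, SA f -> chi (fscale c f) = c * chi f.
  by move=> c f Sf; rewrite /chi psiZ // phZ //; apply: psiS.
have chiM : forall f g, SA f -> SA g -> chi (fmul f g) = chi f * chi g.
  by move=> f g Sf Sg; rewrite /chi psiM // phM //; apply: psiS.
have cstZ : forall c : R[i], fcst (X:=X) c = fscale c (fcst 1).
  by move=> c; apply: functional_extensionality => x; rewrite /fscale /fcst mulr1.
have D0 : D (fcst 0) = 0 by rewrite cstZ DZ ?mul0r.
have chi0 : chi (fcst 0) = 0 by rewrite cstZ chiZ ?mul0r.
have mul1 : forall f : X -> R[i], f = fmul f (fcst 1).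
  by move=> f; apply: functional_extensionality => x; rewrite /fmul /fcst mulr1.
pose e := chi (fcst 1).
have ee : e * e = e by rewrite /e -chiM // -mul1.
have [e0|e1] : e = 0 \/ e = 1.
  have : e * (e - 1) == 0 by rewrite mulrBr ee mulr1 subrr.
  by rewrite mulf_eq0 subr_eq0 => /orP [/eqP|/eqP]; [left|right].
  move=> f Sf; have cf : chi f = 0 by rewrite (mul1 f) chiM // -/e e0 mulr0.
  rewrite (mul1 f) Dder // -/(chi f) -/(chi (fcst 1)) -/e cf e0.
  by rewrite !mul0r addr0.
have D1 : D (fcst 1) = 0.
  have := Dder _ _ (Scst 1) (Scst 1); rewrite -mul1 -/(chi _) -/e e1 !mul1r.
  by rewrite -{1}(addr0 (D (fcst 1))) => /addrI <-.
have Dc : forall c, D (fcst c) = 0 by move=> c; rewrite cstZ DZ // D1 mulr0.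
have chic : forall c, chi (fcst c) = c by move=> c; rewrite cstZ chiZ // -/e e1 mulr1.
have Dann : forall g, SA g -> poly_annihilated g -> D g = 0.
  move=> g Sg [P P0 HP].
  have [rs Hrs] := closed_field_poly_normal P.
  have ginrs : forall x, g x \in undup rs.
    move=> x; rewrite mem_undup -root_prod_XsubC -(rootZ _ _ (a := lead_coef P)).
      by rewrite -Hrs; apply/rootP.
    by rewrite lead_coef_eq0.
  set s := undup rs.
  have us : uniq s by apply: undup_uniq.
  pose Pi := fun (t : seq R[i]) x => \prod_(r <- t) (g x - r).
  have Picons : forall r t, Pi (r :: t) = fmul (fadd g (fcst (- r))) (Pi t).
    by move=> r t; apply: functional_extensionality => x; rewrite /Pi big_cons.
  have Pinil : Pi [::] = fcst 1.
    by apply: functional_extensionality => x; rewrite /Pi big_nil.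
  have SPi : forall t, SA (Pi t).
    by elim => [|r t IH]; rewrite ?Pinil ?Picons; auto.
  have chiPi : forall t, chi (Pi t) = \prod_(r <- t) (chi g - r).
    elim => [|r t IH]; first by rewrite Pinil chic big_nil.
    by rewrite Picons chiM ?chiD ?chic ?IH ?big_cons; auto.
  have DPi : forall t, D (Pi t) = cc (chi g) t * D g.
    elim => [|r t IH]; first by rewrite Pinil D1 mul0r.
    have Sg' : SA (fadd g (fcst (- r))) by auto.
    rewrite Picons Dder ?SPi //.
    change (chi (fadd g (fcst (- r))) * D (Pi t) + chi (Pi t) * D (fadd g (fcst (- r))) = cc (chi g) (r :: t) * D g).
    rewrite chiPi chiD ?chic ?IH ?DD ?Dc ?addr0 /=; auto.
    by rewrite [RHS]mulrDl mulrA.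
  have Pis0 : Pi s = fcst 0.
    apply: functional_extensionality => x; apply/eqP; rewrite /fcst.
    by rewrite /Pi prod_in0 ginrs.
  have chis : chi g \in s by rewrite -prod_in0 -chiPi Pis0 chi0.
  have := DPi s; rewrite Pis0 D0 => /esym/eqP; rewrite mulf_eq0.
  by rewrite (negbTE (@cc_neq0 _ _ _ us chis)) => /eqP.
have Dspan : forall n (c : 'I_n -> R[i]) (g : 'I_n -> X -> R[i]),
    (forall i, SA (g i) /\ D (g i) = 0) ->
    SA (fun x => \sum_(i < n) c i * g i x) /\ D (fun x => \sum_(i < n) c i * g i x) = 0.
  elim => [|n IH] c g Hg.
    have -> : (fun x => \sum_(i < 0) c i * g i x) = fcst 0.
      by apply: functional_extensionality => x; rewrite big_ord0.
    by split; [apply: Scst | apply: D0].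
  have -> : (fun x => \sum_(i < n.+1) c i * g i x) =
     fadd (fun x => \sum_(i < n) c (widen_ord (leqnSn n) i) * g (widen_ord (leqnSn n) i) x)
          (fscale (c ord_max) (g ord_max)).
    by apply: functional_extensionality => x; rewrite big_ord_recr.
  have [S1 D1'] := IH (fun i => c (widen_ord (leqnSn n) i)) (fun i => g (widen_ord (leqnSn n) i))
     (fun i => Hg _).
  have [S2 D2] := Hg ord_max.
  split; first by apply: Sadd => //; apply: Sscl.
  by rewrite DD ?D1' ?DZ ?D2 ?mulr0 ?addr0 //; apply: Sscl.
have DF : forall h, in_alg_span SA h -> SA h /\ D h = 0.
  move=> h [n [c [g [Hg ->]]]]; apply: Dspan => i.
  have [Si Ai] := Hg i; split => //; exact: Dann.
move=> f Sf; apply: Normc.eq0_normc; apply/eqP; rewrite eq_le; apply/andP; split; last first.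
  by case: (D f) => a b; rewrite /Normc.normc sqrtr_ge0.
apply/ler_addgt0Pr => eps eps0; rewrite add0r.
pose K := `|M| + 1.
have K0 : 0 < K by rewrite /K ltr_wpDl.
have [h Fh Nh] := Hdense f Sf (eps / K) (divr_gt0 eps0 K0).
have [Sh Dh] := DF h Fh.
have fsE : fsub f h = fadd f (fscale (-1) h).
  by apply: functional_extensionality => x; rewrite /fsub /fadd /fscale mulN1r.
have Sfh : SA (fsub f h) by rewrite fsE; apply: Sadd => //; apply: Sscl.
have : D (fsub f h) = D f by rewrite fsE DD ?DZ ?Dh ?mulr0 ?addr0 //; apply: Sscl.
move=> <-.
apply: (le_trans (HM _ Sfh)).
have N0' := N0 _ Sfh.
apply: (@le_trans _ _ (K * NA (fsub f h))).
  by apply: ler_wpM2r => //; rewrite /K (le_trans (ler_norm M)) // lerDl.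
rewrite -(@ler_pM2l _ K^-1) ?invr_gt0 // mulrA mulVf ?mul1r ?gt_eqF // mulrC.
exact: ltW.
Qed.
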